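(* Let $X$ be a Priestley space and $\mathcal U\subseteq{\sf DM}(X)$. Then the join $\bigvee\mathcal U$ in ${\sf DM}(X)$ is distributive (i.e., $V\cap\bigvee\mathcal U=\bigvee\{V\cap U:U\in\mathcal U\}$ in ${\sf DM}(X)$ for every $V\in{\sf DM}(X)$) if and only if $\bigvee\mathcal U={\sf int_1\,cl}\bigcup\mathcal U$.
   Context: A Priestley space is a compact space $X$ with a partial order $\le$ such that whenever $x\not\le y$ there is a clopen upset containing $x$ but not $y$. ${\sf cl}$, ${\sf int}$ denote closure and interior in the topology of $X$; ${\sf int_1}$ is the interior in the topology of open upsets, ${\sf cl_2}$ the closure in the topology of open downsets; explicitly ${\sf cl_2}(S)={\uparrow}{\sf cl}(S)$ and ${\sf int_1}(S)=X\setminus{\downarrow}(X\setminus{\sf int}(S))$. A DM-set is an open upset $U$ with ${\sf int_1\,cl_2}(U)=U$; ${\sf DM}(X)$ is the complete lattice of DM-sets, with finite meets given by intersection and joins $\bigvee\mathcal U={\sf int_1\,cl_2}(\bigcup\mathcal U)$. *)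

(* Defs.v *)
From HB Require Import structures.
From mathcomp Require Import all_boot all_order.
From mathcomp Require Import all_classical topology.
Set Implicit Arguments. Unset Strict Implicit. Unset Printing Implicit Defensive.
Local Open Scope classical_set_scope.

Section Priestley.
Context {T : topologicalType} (le : T -> T -> Prop).

Definition is_partial_order : Prop :=
  (forall x, le x x) /\ (forall x y, le x y -> le y x -> x = y) /\
  (forall x y z, le x y -> le y z -> le x z).

Definition is_upset (A : set T) : Prop := forall x y, A x -> le x y -> A y.

Definition is_clopen (A : set T) : Prop := open A /\ closed A.

Definition priestley : Prop :=
  compact [set: T] /\ is_partial_order /\
  (forall x y, ~ le x y ->
     exists U : set T, is_clopen U /\ is_upset U /\ U x /\ ~ U y).

Definition upclosure (A : set T) : set T := [set y | exists2 x, A x & le x y].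
Definition downclosure (A : set T) : set T := [set y | exists2 x, A x & le y x].

Definition cl2 (S : set T) : set T := upclosure (closure S).
Definition int1 (S : set T) : set T := ~` downclosure (~` interior S).

Definition is_DM (U : set T) : Prop :=
  open U /\ is_upset U /\ int1 (cl2 U) = U.

Definition DMjoin (UU : set (set T)) : set T := int1 (cl2 (\bigcup_(U in UU) U)).

Definition DMjoin_distributive (UU : set (set T)) : Prop :=
  forall V, is_DM V -> V `&` DMjoin UU = DMjoin [set V `&` U | U in UU].

End Priestley.

(* Main.v *)
Require Import Defs.
From HB Require Import structures.
From mathcomp Require Import all_boot all_order.
From mathcomp Require Import all_classical topology.
From mathcomp Require finmap.
Local Open Scope classical_set_scope.

Section PT.
Variables (T : topologicalType) (z : T).
Definition pT : Type := T.
HB.instance Definition _ := Topological.on pT.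
HB.instance Definition _ := isPointed.Build pT z.
Lemma compact_coverT (A : set T) : compact A -> @cover_compact T A.
Proof. move=> cA; have E := (@compact_cover pT).
have : @compact pT A by []. rewrite E. exact. Qed.
End PT.

Lemma closedI2 (T : topologicalType) (A B : set T) :
  closed A -> closed B -> closed (A `&` B).
Proof. by move=> cA cB; rewrite -openC setCI; apply: openU; rewrite openC. Qed.

Lemma closedU2 (T : topologicalType) (A B : set T) :
  closed A -> closed B -> closed (A `|` B).
Proof. by move=> cA cB; rewrite -openC setCU; apply: openI; rewrite openC. Qed.

Lemma sep (T : topologicalType) (PC PD : set T -> Prop)
  (PCT : PC setT) (PCI : forall A B, PC A -> PC B -> PC (A `&` B))
  (PD0 : PD set0) (PDU : forall A B, PD A -> PD B -> PD (A `|` B))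
  (z : T) (F : set T) (cF : compact F)
  (H : forall w, F w -> exists C D,
      [/\ PC C, PD D, closed C, open D & [/\ C z, ~ D z & (~ C w \/ D w)]]) :
  exists C D, [/\ PC C, PD D, closed C, open D & [/\ C z, ~ D z &
     forall p, F p -> ~ C p \/ D p]].
Proof.
pose good := fun i : (set T * set T)%type =>
  [/\ PC i.1, PD i.2, closed i.1, open i.2 & i.1 z /\ ~ i.2 z].
have [] := @compact_coverT T z F cF _ good (fun i => ~` i.1 `|` i.2).
- move=> i [_ _ c o _]; apply: openU => //; exact: closed_openC.
- move=> w Fw; have [C [D [? ? ? ? [? ? h]]]] := H w Fw; exists (C, D) => //.
- move=> D' sub cov.
  have gen : forall s : seq (set T * set T), (forall i, i \in s -> good i) ->
    exists C D, [/\ PC C, PD D, closed C, open D & [/\ C z, ~ D z &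
      forall i, i \in s -> forall p, (~` i.1 `|` i.2) p -> ~ C p \/ D p]].
    elim=> [|i s IH] hs.
      exists setT, set0; split => //; [exact: open0 | by split].
    have [|C [D [a b c d [e f g]]]] := IH.
      by move=> j js; apply: hs; rewrite inE js orbT.
    have [a' b' c' d' [e' f']] := hs i (mem_head _ _).
    exists (i.1 `&` C), (i.2 `|` D); split.
    + exact: PCI.
    + exact: PDU.
    + exact: closedI2.
    + exact: openU.
    + split; first by split.
      by case.
      move=> j; rewrite inE => /orP [/eqP -> | js] p hp.
        by case: hp => h; [left => -[] | right; left].
      by case: (g j js p hp) => h; [left => -[] | right; right].
  have [|C [D [a b c d [e f g]]]] := gen (finmap.enum_fset D').
    by move=> i /sub; rewrite in_setE.
  exists C, D; split => //; split => // p Fp.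
  have [i Di hi] := cov p Fp.
  exact: g i Di p hi.
Qed.

Section Lemmas.
Context {T : topologicalType} (le : T -> T -> Prop).

Lemma int1P S x : int1 le S x <-> forall y, le x y -> S° y.
Proof.
rewrite /int1 /downclosure; split.
- move=> h y xy; apply: contrapT => ny; apply: h; by exists y.
- by move=> h [y ny xy]; apply: ny (h y xy).
Qed.

Lemma int1S A B : A `<=` B -> int1 le A `<=` int1 le B.
Proof.
move=> AB x /int1P h; apply/int1P => y xy; exact: interiorS AB _ (h y xy).
Qed.

Lemma cl2S A B : A `<=` B -> cl2 le A `<=` cl2 le B.
Proof. by move=> AB y [x cx xy]; exists x => //; apply: closureS AB _ cx. Qed.

Hypothesis rf : forall x, le x x.
Hypothesis tr : forall x y z, le x y -> le y z -> le x z.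

Lemma clos_cl2 A : closure A `<=` cl2 le A.
Proof. by move=> x cx; exists x. Qed.

Lemma int1_up S : is_upset le (int1 le S).
Proof.
move=> x y /int1P h xy; apply/int1P => w yw; exact: h w (tr _ _ _ xy yw).
Qed.

Lemma clopen_DM C : is_clopen C -> is_upset le C -> is_DM le C.
Proof.
move=> [oC cC] uC; split => //.
rewrite /cl2 -((closure_id C).1 cC).
have -> : upclosure le C = C.
  apply/seteqP; split; first by move=> y [x Cx xy]; exact: uC xy.
  by move=> y Cy; exists y.
rewrite /int1 ((interior_id C).1 oC).
split => //; apply/seteqP; split => x.
- by move=> h; apply: contrapT => nx; apply: h; exists x.
- by move=> Cx [y ny xy]; apply: ny (uC _ _ Cx xy).
Qed.

Lemma DMjoin_sub D A : is_DM le D -> A `<=` D -> int1 le (cl2 le A) `<=` D.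
Proof.
by move=> [_ [_ E]] AD; rewrite -E; apply: int1S; apply: cl2S.
Qed.

End Lemmas.

Lemma bigcup_img (T : Type) (V : set T) (UU : set (set T)) :
  \bigcup_(U in [set V `&` U | U in UU]) U = V `&` \bigcup_(U in UU) U.
Proof.
apply/seteqP; split => x.
- by move=> [_ [U hU <-] [Vx Ux]]; split => //; exists U.
- by move=> [Vx [U hU Ux]]; exists (V `&` U) => //; exists U.
Qed.

Section Priestley.
Context {T : topologicalType} {le : T -> T -> Prop} (hX : priestley le).

Lemma int1_open S : open (int1 le S).
Proof.
have [hc [[rf [anti tr]] sP]] := hX.
rewrite openE => y hy.
have cF : compact (~` S°).
  apply: (subclosed_compact _ hc) => //.
  by rewrite closedC; exact: open_interior.
have [] := @sep T (fun C => is_upset le C /\ open C) (fun D => D = set0)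
   _ _ _ _ y (~` S°) cF.
- by split => //; exact: openT.
- move=> A B [uA oA] [uB oB]; split; last exact: openI.
  by move=> x z [Ax Bx] xz; split; [exact: uA xz | exact: uB xz].
- by [].
- by move=> A B -> ->; rewrite setU0.
- move=> w Fw.
  have nyw : ~ le y w by move=> yw; apply: Fw; exact: (proj1 (int1P le S y) hy w yw).
  have [U [[oU cU] [uU [Uy nUw]]]] := sP y w nyw.
  exists U, set0; split => //; [exact: open0 | split => //; by left].
- move=> C [D [[uC oC] D0 _ _ [Cy _ h]]]; subst D.
  apply: (filterS _ (open_nbhs_nbhs (conj oC Cy))).
  move=> p Cp; apply/int1P => q pq; apply: contrapT => nq.
  by case: (h q nq) => //; apply; exact: uC pq.
Qed.

Lemma basis z O : open O -> O z -> exists C D,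
  [/\ is_clopen C, is_upset le C, is_clopen D, is_upset le D &
    [/\ C z, ~ D z & forall p, C p -> ~ D p -> O p]].
Proof.
have [hc [[rf [anti tr]] sP]] := hX.
move=> oO Oz.
have cF : compact (~` O).
  apply: (subclosed_compact _ hc) => //.
  by rewrite closedC.
pose P := fun A : set T => is_clopen A /\ is_upset le A.
have [] := @sep T P P _ _ _ _ z (~` O) cF.
- by rewrite /P; split; [split; [exact: openT | exact: closedT] | by []].
- move=> A B [[oA cA] uA] [[oB cB] uB]; split; first split.
  + exact: openI.
  + exact: closedI2.
  + by move=> x w [Ax Bx] xw; split; [exact: uA xw | exact: uB xw].
- by rewrite /P; split; [split; [exact: open0 | exact: closed0] | by []].
- move=> A B [[oA cA] uA] [[oB cB] uB]; split; first split.
  + exact: openU.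
  + exact: closedU2.
  + by move=> x w [Ax|Bx] xw; [left; exact: uA xw | right; exact: uB xw].
- move=> w nOw.
  case: (pselect (le z w)) => zw.
  + have nwz : ~ le w z by move=> wz; apply: nOw; rewrite -(anti _ _ zw wz).
    have [U [[oU cU] [uU [Uw nUz]]]] := sP w z nwz.
    exists setT, U; split => //.
    all: try (by rewrite /P; split; [split; [exact: openT | exact: closedT] | by []]).
    all: try (by rewrite /P).
    all: try exact: closedT.
    constructor; [by [] | exact: nUz | by right].
  + have [U [[oU cU] [uU [Uz nUw]]]] := sP z w zw.
    exists U, set0; split => //.
    all: try (by rewrite /P; split; [split; [exact: open0 | exact: closed0] | by []]).
    all: try (by rewrite /P).
    all: try exact: open0.
    constructor; [by [] | by [] | by left].
- move=> C [D [[cC uC] [cD uD] _ _ [Cz nDz h]]].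
  exists C, D; split => //; split => // p Cp nDp; apply: contrapT => nO.
  by case: (h p nO).
Qed.

End Priestley.

Theorem theorem5p5 (T : topologicalType) (le : T -> T -> Prop)
  (hX : priestley le) (UU : set (set T)) (hUU : forall U, UU U -> is_DM le U) :
  DMjoin_distributive le UU <-> DMjoin le UU = int1 le (closure (\bigcup_(U in UU) U)).
Proof.
have hX' := hX; have [hc [[rf [anti tr]] sP]] := hX'.
split.
- move=> hd; apply/seteqP; split; last first.
    by rewrite /DMjoin; exact: (int1S le _ _ (clos_cl2 le rf _)).
  have Jcl : DMjoin le UU `<=` closure (\bigcup_(U in UU) U).
    move=> z Jz; apply: contrapT => nz.
    have [B zB WB] : exists2 B, nbhs z B &
        ~ ((\bigcup_(U in UU) U) `&` B !=set0).
      apply: contrapT => h; apply: nz => B zB; apply: contrapT => hh.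
      by apply: h; exists B.
    have [C [D [cC uC cD uD [Cz nDz CDO]]]] := basis hX z (interior B) (@open_interior _ B) zB.
    have CDM := clopen_DM le rf _ cC uC; have DDM := clopen_DM le rf _ cD uD.
    have : (C `&` DMjoin le UU) z by split.
    rewrite (hd C CDM) /DMjoin bigcup_img => h; apply: nDz.
    apply: (DMjoin_sub le _ _ DDM _ _ h) => p [Cp Wp]; apply: contrapT => nD.
    apply: WB; exists p; split => //; apply: interior_subset; exact: CDO.
  move=> x Jx; apply/int1P => y xy.
  have Jy : DMjoin le UU y := int1_up le tr _ _ _ Jx xy.
  have oJ := int1_open hX (cl2 le (\bigcup_(U in UU) U)).
  rewrite openE in oJ.
  exact: filterS Jcl (oJ y Jy).
- move=> E V VDM; have [oV [uV VE]] := VDM.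
  rewrite E /DMjoin bigcup_img.
  apply/seteqP; split.
  + move=> x [Vx Kx]; apply/int1P => y xy.
    have Vy := uV _ _ Vx xy.
    have Ky := proj1 (int1P le _ x) Kx y xy.
    have nV : nbhs y V by apply: open_nbhs_nbhs.
    apply: filterS (filterI nV Ky) => p [Vp cp].
    apply: (clos_cl2 le rf) => B pB.
    have pV : nbhs p V by apply: open_nbhs_nbhs.
    have [q [Wq [Vq Bq]]] := cp (V `&` B) (filterI pV pB).
    by exists q; split => //; split.
  + move=> x h; split.
      by apply: (DMjoin_sub le _ _ VDM _ _ h) => p [].
    rewrite -E; apply: (int1S le (cl2 le (V `&` \bigcup_(U in UU) U)) _ _ _ h).
    by apply: cl2S => p [].
Qed.
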